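(* Let $I\subseteq\{1,\dots,n\}$. Then the barycenter of the standard parabolic face $F_I$ (i.e. of the weights in $F_I$) is of the form $\sum_{i\in I}a_i\tilde\omega_i$ where the $a_i$ are non-negative rational numbers.
   Context: Let $\mathfrak g$ be a finite-dimensional complex simple Lie algebra with root system $\Phi$, base $\Pi=\{\alpha_1,\dots,\alpha_n\}$, Weyl group $W$; $E$ is the real span of $\Pi$ with $W$-invariant inner product $(\cdot,\cdot)$. Let $\omega_i$ be the fundamental weights and $\tilde\omega_i=2\omega_i/(\alpha_i,\alpha_i)$, so $(\tilde\omega_i,\alpha_j)=\delta_{ij}$. Fix a dominant integral weight $\lambda=\sum_i m_i\alpha_i$ and let $P(\lambda)$ be the set of weights of the irreducible module of highest weight $\lambda$; $\mathbf P=\mathrm{conv}(W\lambda)$. For $I\subseteq\{1,\dots,n\}$, $P_I=\{\mu\in P(\lambda)\mid(\mu,\tilde\omega_i)=m_i\ \forall i\in I\}$ and $F_I=\{x\in\mathbf P\mid (x,\tilde\omega_i)=m_i\ \forall i\in I\}$; $P_I$ is the set of weights in $F_I$, and the barycenter of $F_I$ is $\frac{1}{|P_I|}\sum_{\mu\in P_I}\mu$. *)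

(* Defs.v *)
From HB Require Import structures.
From mathcomp Require Import all_boot all_order all_algebra.
Set Implicit Arguments. Unset Strict Implicit. Unset Printing Implicit Defensive.
Import Order.TTheory GRing.Theory Num.Theory.
Local Open Scope ring_scope.

Section RootData.
Variables (R : realFieldType) (n : nat).
Implicit Types (B : 'M[R]_n) (x y lam mu : 'rV[R]_n).

(* A vector x : 'rV_n stands for sum_i x_i alpha_i in E.  B is the Gram matrix
   B i j = (alpha_i, alpha_j) of the W-invariant inner product. *)
Definition ip B x y : R := (x *m B *m y^T) 0 0.

Definition alpha (i : 'I_n) : 'rV[R]_n := delta_mx 0 i.

Definition copair B x (i : 'I_n) : R :=
  2 * ip B x (alpha i) / ip B (alpha i) (alpha i).

Definition sref B (i : 'I_n) x : 'rV[R]_n := x - copair B x i *: alpha i.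

(* action of the Weyl group element s_{i_1} ... s_{i_k} (W is generated by the
   simple reflections, so every w in W is of this form) *)
Definition wact B (s : seq 'I_n) x : 'rV[R]_n := foldr (sref B) x s.

Definition isNatR (r : R) : Prop := exists k : nat, r = k%:R.

(* tilde omega_i : the vector with (tilde omega_i, alpha_j) = delta_ij *)
Definition omegat B (i : 'I_n) : 'rV[R]_n := row i (invmx B).

(* B is the Gram matrix of a base of the root system of a finite-dimensional
   complex simple Lie algebra: symmetric, positive definite, Cartan integers
   2(alpha_i,alpha_j)/(alpha_j,alpha_j) are non-positive integers for i<>j,
   and the Dynkin diagram is connected (indecomposable). *)
Definition simple_cartan_gram B : Prop :=
  [/\ (0 < n)%N, B^T = B,
      (forall x, x != 0 -> 0 < ip B x x),
      (forall i j : 'I_n, i != j -> exists k : nat, copair B (alpha i) j = - k%:R)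
    & (forall J : {set 'I_n}, J != set0 -> J != setT ->
         exists i j, [/\ i \in J, j \notin J & B i j != 0])].

(* normalisation: the inner product takes rational values on the roots *)
Definition rational_gram B : Prop := forall i j, exists q : rat, B i j = ratr q.

Definition dominant_integral B lam : Prop := forall i, isNatR (copair B lam i).

(* mu in P(lam): the set of weights of the irreducible module of highest weight
   lam.  Described (Humphreys, 13.2 and 21.3) as the mu such that w mu <= lam in
   the dominance order for every w in W. *)
Definition weight_of B lam mu : Prop :=
  forall (s : seq 'I_n) (i : 'I_n), isNatR ((lam - wact B s mu) 0 i).

(* P_I = { mu in P(lam) | (mu, tilde omega_i) = m_i for all i in I },
   where lam = sum_i m_i alpha_i, i.e. m_i = lam 0 i. *)
Definition P_I B lam (I : {set 'I_n}) mu : Prop :=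
  weight_of B lam mu /\ (forall i, i \in I -> ip B mu (omegat B i) = lam 0 i).

End RootData.

(* Main.v *)
Require Import Defs.
From HB Require Import structures.
From mathcomp Require Import all_boot all_order all_algebra ring lra.
Import Order.TTheory GRing.Theory Num.Theory.
Local Open Scope ring_scope.

Section H.
Set Implicit Arguments. Unset Strict Implicit.
Variables (R : realFieldType) (n : nat) (B : 'M[R]_n).

Lemma ipD x y z : ip B (x + y) z = ip B x z + ip B y z.
Proof. by rewrite /ip !mulmxDl mxE. Qed.
Lemma ipZ a x z : ip B (a *: x) z = a * ip B x z.
Proof. by rewrite /ip -!scalemxAl mxE. Qed.
Lemma ip0 z : ip B 0 z = 0.
Proof. by rewrite /ip !mul0mx mxE. Qed.
Lemma ipN x z : ip B (- x) z = - ip B x z.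
Proof. by rewrite -scaleN1r ipZ mulN1r. Qed.
Lemma ipB x y z : ip B (x - y) z = ip B x z - ip B y z.
Proof. by rewrite ipD ipN. Qed.
Lemma ip_sum (s : seq 'rV[R]_n) z : ip B (\sum_(mu <- s) mu) z = \sum_(mu <- s) ip B mu z.
Proof. elim: s => [|x s IH]; rewrite ?big_nil ?ip0 // !big_cons ipD IH. by []. Qed.
Lemma ip_alpha x i : ip B x (alpha R i) = (x *m B) 0 i.
Proof. by rewrite /ip /alpha trmx_delta -colE mxE. Qed.
Lemma ip_alpha_sum x i : ip B x (alpha R i) = \sum_k x 0 k * B k i.
Proof. by rewrite ip_alpha mxE. Qed.
Lemma ip_aa k i : ip B (alpha R k) (alpha R i) = B k i.
Proof. by rewrite ip_alpha /alpha -rowE mxE. Qed.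

Lemma unitB : (forall x, x != 0 -> 0 < ip B x x) -> B \in unitmx.
Proof.
move=> pd; rewrite -row_free_unit; apply: inj_row_free => v vB.
apply/eqP; apply: contraT => /pd; by rewrite /ip vB mul0mx mxE ltxx.
Qed.

Lemma ip_omegat x i : B^T = B -> B \in unitmx -> ip B x (omegat B i) = x 0 i.
Proof.
move=> sB uB; rewrite /ip /omegat tr_row trmx_inv sB.
by rewrite colE mulmxA mulmxK // -colE mxE.
Qed.

Definition isRat (r : R) := exists q : rat, r = ratr q.
Lemma isRatD x y : isRat x -> isRat y -> isRat (x + y).
Proof. by move=> [p ->] [q ->]; exists (p + q); rewrite rmorphD. Qed.
Lemma isRatM x y : isRat x -> isRat y -> isRat (x * y).
Proof. by move=> [p ->] [q ->]; exists (p * q); rewrite rmorphM. Qed.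
Lemma isRatN x : isRat x -> isRat (- x).
Proof. by move=> [p ->]; exists (- p); rewrite rmorphN. Qed.
Lemma isRatV x : isRat x -> isRat (x^-1).
Proof. by move=> [p ->]; exists (p^-1); rewrite fmorphV. Qed.
Lemma isRatn k : isRat k%:R.
Proof. by exists k%:R; rewrite ratr_nat. Qed.

Lemma copairB x c j : copair B (x - c *: alpha R j) j = copair B x j - c * copair B (alpha R j) j.
Proof. rewrite /copair ipB ipZ; ring. Qed.
Lemma copair_aa j : B j j != 0 -> copair B (alpha R j) j = 2.
Proof. move=> h; rewrite /copair ip_aa -mulrA divff ?mulr1 //. Qed.
Lemma sref_inv j x : B j j != 0 -> sref B j (sref B j x) = x.
Proof.
move=> h; rewrite {1}/sref copairB copair_aa // /sref.
set c := copair B x j.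
have -> : c - c * 2 = - c by ring.
by rewrite scaleNr opprK subrK.
Qed.
Lemma copairD x y j : copair B (x + y) j = copair B x j + copair B y j.
Proof. by rewrite /copair ipD mulrDr mulrDl. Qed.
Lemma copair0 j : copair B 0 j = 0.
Proof. by rewrite /copair ip0 mulr0 mul0r. Qed.
Lemma sref_sum j (s : seq 'rV[R]_n) : sref B j (\sum_(mu <- s) mu) = \sum_(mu <- s) sref B j mu.
Proof.
elim: s => [|x s IH]; first by rewrite !big_nil /sref copair0 scale0r subr0.
rewrite !big_cons -IH /sref copairD scalerDl opprD. by rewrite addrACA.
Qed.
End H.

Theorem lemma4p10 (R : realFieldType) (n : nat) (B : 'M[R]_n)
    (lam : 'rV[R]_n) (I : {set 'I_n}) (s : seq 'rV[R]_n) :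
  simple_cartan_gram B -> rational_gram B -> dominant_integral B lam ->
  uniq s -> (forall mu, mu \in s <-> P_I B lam I mu) ->
  exists a : 'I_n -> rat,
    (forall i, i \in I -> 0 <= a i) /\
    (size s)%:R^-1 *: \sum_(mu <- s) mu = \sum_(i in I) ratr (a i) *: omegat B i.
Proof.
move=> [n0 sB pd cart conn] hrat dom us Hs.
have uB := unitB pd.
have Bpos i : 0 < B i i.
  rewrite -ip_aa; apply: pd; apply/eqP => /matrixP/(_ 0 i).
  by rewrite !mxE !eqxx /= => /eqP; rewrite oner_eq0.
have Bne i : B i i != 0 by rewrite gt_eqF.
have stab j mu : j \notin I -> P_I B lam I mu -> P_I B lam I (sref B j mu).
  move=> jI [W E]; split.
    by move=> s' i; have := W (rcons s' j) i; rewrite /wact -cats1 foldr_cat.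
  move=> i iI; rewrite (ip_omegat _ _ sB uB) /sref !mxE -(E i iI) (ip_omegat _ _ sB uB).
  have -> : (i == j) = false by apply/eqP => ij; move: jI; rewrite -ij iI.
  by rewrite andbF mulr0 subr0.
set S := \sum_(mu <- s) mu.
have zero j : j \notin I -> ip B S (alpha R j) = 0.
  move=> jI.
  have pe : perm_eq s (map (sref B j) s).
    apply: uniq_perm => //.
      by rewrite (map_inj_uniq (can_inj (fun x => sref_inv x (Bne j)))).
    move=> x; apply/idP/idP.
      move=> xs; rewrite -(sref_inv x (Bne j)); apply: map_f.
      by apply/Hs; apply: stab => //; apply/Hs.
    by case/mapP => y ys ->; apply/Hs; apply: stab => //; apply/Hs.
  have eS : sref B j S = S.
    by rewrite /S sref_sum [RHS](perm_big _ pe) big_map.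
  move: eS; rewrite /sref => /eqP; rewrite subr_eq addrC -subr_eq subrr eq_sym.
  rewrite scaler_eq0 => /orP[|/eqP/matrixP/(_ 0 j)].
    rewrite /copair ip_aa mulf_eq0 invr_eq0 (negbTE (Bne j)) orbF mulf_eq0 => /orP[] /eqP // h; by move: (@pnatr_eq0 R 2); rewrite h eqxx.
  by rewrite !mxE !eqxx /= => /eqP; rewrite oner_eq0.
have Bneg k i : k != i -> B k i <= 0.
  move=> ki; have [m hm] := cart k i ki.
  have e : B k i = copair B (alpha R k) i * B i i / 2.
    by rewrite /copair !ip_aa; field; exact: Bne.
  rewrite e hm mulNr mulNr oppr_le0; apply: divr_ge0 => //.
  by apply: mulr_ge0 => //; apply: ltW.
have step3 i mu : i \in I -> mu \in s ->
    isRat (ip B mu (alpha R i)) /\ 0 <= ip B mu (alpha R i).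
  move=> iI /Hs [W E].
  have Ei := E i iI; rewrite (ip_omegat _ _ sB uB) in Ei.
  have hd k : isNatR ((lam - mu) 0 k) := W [::] k.
  have -> : ip B mu (alpha R i) = ip B lam (alpha R i) - ip B (lam - mu) (alpha R i).
    by rewrite ipB opprB addrC subrK.
  have [K hK] := dom i.
  have el : ip B lam (alpha R i) = K%:R * B i i / 2.
    by rewrite -hK /copair ip_aa; field; exact: Bne.
  rewrite el ip_alpha_sum; split.
    apply: isRatD; first apply: isRatM; first apply: isRatM.
    - exact: isRatn.
    - by have [q hq] := hrat i i; exists q.
    - by exists 2^-1; rewrite fmorphV rmorphMn rmorph1.
    apply: isRatN; apply: big_ind; first by exists 0; rewrite rmorph0.
      exact: isRatD.
    move=> k _; apply: isRatM; first by have [m ->] := hd k; apply: isRatn.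
    by have [q hq] := hrat k i; exists q.
  rewrite subr_ge0; apply: (@le_trans _ _ 0).
    apply: sumr_le0 => k _; have [->|ki] := eqVneq k i.
      by rewrite !mxE Ei subrr mul0r.
    apply: mulr_ge0_le0; last exact: Bneg.
    by have [m ->] := hd k; apply: ler0n.
  apply: divr_ge0 => //; apply: mulr_ge0 => //; exact: ltW.
have ex i : exists q : rat, i \in I -> ip B ((size s)%:R^-1 *: S) (alpha R i) = ratr q.
  case: (boolP (i \in I)) => iI; last by exists 0.
  rewrite ipZ /S ip_sum big_seq.
  have h1 : isRat (size s)%:R^-1 := isRatV (@isRatn R _).
  have h2 : isRat (\sum_(mu <- s | mu \in s) ip B mu (alpha R i)).
    apply: big_ind; first by exists 0; rewrite rmorph0.
      exact: isRatD.
    by move=> mu ms; exact: (step3 i mu iI ms).1.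
  by have [q hq] := isRatM h1 h2; exists q.
have [a ha] := fin_all_exists ex.
exists a; split.
  move=> i iI; rewrite -(ler0q R) -ha // ipZ /S ip_sum; apply: mulr_ge0.
    by rewrite invr_ge0 ler0n.
  rewrite big_seq; apply: sumr_ge0 => mu ms; exact: (step3 i mu iI ms).2.
apply: (can_inj (mulmxK uB)); apply/matrixP => i0 j; rewrite ord1 -ip_alpha.
rewrite mulmx_suml summxE.
under eq_bigr => i _ do rewrite -scalemxAl /omegat rowE -mulmxA mulVmx // mulmx1 !mxE.
case: (boolP (j \in I)) => jI.
  rewrite (bigD1 j) //= eqxx mulr1 big1 ?addr0 ?ha //.
  by move=> i /andP[_ ij]; rewrite eq_sym (negbTE ij) mulr0.
rewrite big1 ?ipZ ?zero ?mulr0 // => i iI.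
have : j != i by apply: contraNneq jI => ->.
by move=> /negbTE ->; rewrite mulr0.
Qed.
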